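(* Assume that $(X_1,Y_1),\dots,(X_{n+1},Y_{n+1})$ are exchangeable, that the predictor $\hat f_D$ is invariant to permutations of the data in $D$, and that the non-conformity scores $S_{D^{Y_{n+1}}}(X_1,Y_1),\dots,S_{D^{Y_{n+1}}}(X_{n+1},Y_{n+1})$ are almost surely distinct. Assume further that there exists a constant $c>0$ such that the conditional density $p(\cdot\mid D,X_{n+1})$ of $Y_{n+1}$ on $\mathcal Y$ is bounded above by $c$. Then for every $\alpha\in(0,1)$, $$\mathbb P\big[Y_{n+1}\in\tilde C_\alpha(X_{n+1})\big]\le1-\alpha+\frac1{n+1}+c\,\mathbb E_{D,X_{n+1}}\big[\mathrm{THK}_\alpha(X_{n+1})\big].$$
   Context: Let $\mathcal X\subset\mathbb R^d$, $\mathcal Y\subset\mathbb R$, $D=\{(X_1,Y_1),\dots,(X_n,Y_n)\}$, and a further pair $(X_{n+1},Y_{n+1})$. For $y\in\mathcal Y$, $D^y=D\cup\{(X_{n+1},y)\}$, $\hat f_{D^y}$ a predictor trained on $D^y$, $s:\mathcal Y\times\mathcal Y\to\mathbb R_+$ a non-conformity function, $S_{D^y}(X_i,Y_i)=s(Y_i,\hat f_{D^y}(X_i))$ ($i\le n$), $S_{D^y}(X_{n+1},y)=s(y,\hat f_{D^y}(X_{n+1}))$, $\hat\pi_D(X_{n+1},y)=\frac{1+\sum_{i=1}^n\mathbb 1\{S_{D^y}(X_i,Y_i)\ge S_{D^y}(X_{n+1},y)\}}{n+1}$, $\hat C_\alpha(X_{n+1})=\{y:\hat\pi_D(X_{n+1},y)>\alpha\}$.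 For every $y$, let $\tilde S_{D^y}(X_i,Y_i)$, $\tilde S_{D^y}(X_{n+1},y)$ be approximate scores and $0\le\tau_i(y)<\infty$ with $|S_{D^y}(X_i,Y_i)-\tilde S_{D^y}(X_i,Y_i)|\le\tau_i(y)$ ($i\le n$) and $|S_{D^y}(X_{n+1},y)-\tilde S_{D^y}(X_{n+1},y)|\le\tau_{n+1}(y)$; $\tilde\pi_D(X_{n+1},y)=\frac{1+\sum_{i=1}^n\mathbb 1\{\tilde S_{D^y}(X_i,Y_i)+\tau_i(y)\ge\tilde S_{D^y}(X_{n+1},y)-\tau_{n+1}(y)\}}{n+1}$, $\tilde C_\alpha(X_{n+1})=\{y:\tilde\pi_D(X_{n+1},y)>\alpha\}$, and $\mathrm{THK}_\alpha(X_{n+1})=\mathcal L(\tilde C_\alpha(X_{n+1})\,\Delta\,\hat C_\alpha(X_{n+1}))$ ($\mathcal L$ Lebesgue measure, $\Delta$ symmetric difference). *)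

(* Defs.v *)
From HB Require Import structures.
From mathcomp Require Import all_boot all_order all_algebra all_classical all_reals all_analysis.
From mathcomp Require Import perm.

Set Implicit Arguments.
Unset Strict Implicit.
Unset Printing Implicit Defensive.

Import Order.TTheory GRing.Theory Num.Theory.
Local Open Scope classical_set_scope.
Local Open Scope ring_scope.

Notation datum R dd := (dd.-tuple R * R)%type.

(* Points are indexed by 'I_n.+1; index i : 'I_n.+1 with i < n is the paper's
   (X_{i+1}, Y_{i+1}); the last index ord_max is the test point (X_{n+1}, Y_{n+1}). *)

Definition augment (R : realType) (T : Type) (n dd : nat)
  (Z : 'I_n.+1 -> T -> datum R dd) (w : T) (y : R) : n.+1.-tuple (datum R dd) :=
  [tuple (if i == ord_max then ((Z ord_max w).1, y) else Z i w) | i < n.+1].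

Definition full_data (R : realType) (T : Type) (n dd : nat)
  (Z : 'I_n.+1 -> T -> datum R dd) (w : T) : n.+1.-tuple (datum R dd) :=
  [tuple Z i w | i < n.+1].

Definition cond_var (R : realType) (T : Type) (n dd : nat)
  (Z : 'I_n.+1 -> T -> datum R dd) (w : T) : n.-tuple (datum R dd) * dd.-tuple R :=
  ([tuple Z (widen_ord (leqnSn n) i) w | i < n], (Z ord_max w).1).

Definition score (R : realType) (n dd : nat)
  (fit : n.+1.-tuple (datum R dd) -> dd.-tuple R -> R) (s : R -> R -> R)
  (z : n.+1.-tuple (datum R dd)) (i : 'I_n.+1) : R :=
  s (tnth z i).2 (fit z (tnth z i).1).

Definition pval (R : realType) (n : nat) (S : 'I_n.+1 -> R) : R :=
  (1 + #|[set i : 'I_n.+1 | (i != ord_max) && (S ord_max <= S i)]|)%:R / (n.+1)%:R.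

Definition pval_tilde (R : realType) (n : nat) (St tau : 'I_n.+1 -> R) : R :=
  (1 + #|[set i : 'I_n.+1 | (i != ord_max) &&
            (St ord_max - tau ord_max <= St i + tau i)]|)%:R / (n.+1)%:R.

Definition C_hat (R : realType) (T : Type) (n dd : nat) (Yset : set R)
  (Z : 'I_n.+1 -> T -> datum R dd)
  (fit : n.+1.-tuple (datum R dd) -> dd.-tuple R -> R) (s : R -> R -> R)
  (alpha : R) (w : T) : set R :=
  [set y | Yset y /\ alpha < pval (score fit s (augment Z w y))].

Definition C_tilde (R : realType) (T : Type) (n dd : nat) (Yset : set R)
  (Z : 'I_n.+1 -> T -> datum R dd)
  (Stil tau : n.+1.-tuple (datum R dd) -> 'I_n.+1 -> R)
  (alpha : R) (w : T) : set R :=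
  [set y | Yset y /\ alpha < pval_tilde (Stil (augment Z w y)) (tau (augment Z w y))].

Definition symdiff (U : Type) (A B : set U) : set U := (A `\` B) `|` (B `\` A).

Definition THK (R : realType) (T : Type) (n dd : nat) (Yset : set R)
  (Z : 'I_n.+1 -> T -> datum R dd)
  (fit : n.+1.-tuple (datum R dd) -> dd.-tuple R -> R) (s : R -> R -> R)
  (Stil tau : n.+1.-tuple (datum R dd) -> 'I_n.+1 -> R)
  (alpha : R) (w : T) : \bar R :=
  (@lebesgue_measure R) (symdiff (C_tilde Yset Z Stil tau alpha w)
                                 (C_hat Yset Z fit s alpha w)).

Definition exchangeable (R : realType) (d : measure_display) (T : measurableType d)
  (P : probability T R) (n dd : nat) (Z : 'I_n.+1 -> T -> datum R dd) : Prop :=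
  forall (sg : 'S_n.+1) (A : set (n.+1.-tuple (datum R dd))), measurable A ->
    P ((fun w => [tuple Z (sg i) w | i < n.+1]) @^-1` A) =
    P ((fun w => [tuple Z i w | i < n.+1]) @^-1` A).

(* The conditional law of Y given W has a (jointly measurable) density p with
   respect to Lebesgue measure on Yset, bounded above by c on Yset:
   P(W in B, Y in A) = E[ 1_{W in B} \int_{A cap Yset} p(W, y) dy ]. *)
Definition cond_density_bounded (R : realType) (d : measure_display)
  (T : measurableType d) (P : probability T R) (dW : measure_display)
  (Wt : measurableType dW) (W : T -> Wt) (Y : T -> R) (Yset : set R) (c : R) : Prop :=
  exists p : Wt -> R -> R,
    [/\ measurable_fun [set: (Wt * measurableTypeR R)%type] (fun q => p q.1 q.2),
        (forall w y, 0 <= p w y),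
        (forall w y, Yset y -> p w y <= c) &
        (forall (B : set Wt) (A : set (measurableTypeR R)), measurable B -> measurable A ->
          P (W @^-1` B `&` Y @^-1` A) =
          (\int[P]_(x in W @^-1` B)
             (\int[@lebesgue_measure R]_(y in A `&` Yset) (p (W x) y)%:E))%E)].

(* Main.v *)
Require Import Defs.
From HB Require Import structures.
From mathcomp Require Import all_boot all_order all_algebra all_classical all_reals all_analysis.
From mathcomp Require Import perm.
From mathcomp Require Import measurable_realfun lra.
Require Import Defs.
Import Order.TTheory GRing.Theory Num.Theory.
Local Open Scope classical_set_scope.
Local Open Scope ring_scope.

Lemma count_bound (R : realType) (N : nat) (S : 'I_N -> R) (alpha : R) :
  (0 < N)%N -> injective S -> alpha < 1 ->
  #|[set j | alpha < (1 + #|[set i | (i != j) && (S j <= S i)]|)%:R / N%:R]|%:R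
    <= N%:R * (1 - alpha) + 1.
Proof.
move=> N0 injS a1.
set J := [set j | _].
have N0' : (0 : R) < N%:R by rewrite ltr0n.
have [j0 j0J|J0] := pickP (mem J); last first.
  rewrite eq_card0 //=.
  have : 0 <= 1 - alpha by rewrite subr_ge0 ltW.
  nra.
have [jm Jjm Hmax] : exists2 jm, jm \in J & forall j, j \in J -> S j <= S jm.
  case: (@arg_maxP _ _ _ j0 (mem J) S j0J) => jm Jjm H.
  by exists jm.
move: (Jjm) => /set_mem Ha.
set c := #|[set i | (i != jm) && (S jm <= S i)]|.
have cle : (c <= #|[predC J]|)%N.
  have -> : c = #|[pred i | (i != jm) && (S jm <= S i)]|.
    apply: eq_card => i; rewrite [RHS]inE; apply/idP/idP => [/set_mem //|H].
    exact: mem_set.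
  apply/subset_leq_card/fintype.subsetP.
    move=> i; rewrite inE => /andP[ij Sji].
    rewrite inE; apply/negP => iJ.
    have := Hmax i iJ => Sij.
    have /injS eij : S i = S jm by apply/eqP; rewrite eq_le Sij Sji.
    by rewrite eij eqxx in ij.

have := cardC (mem J); rewrite card_ord => HC.
have JN : (#|J| <= N)%N by rewrite -[leqRHS]HC leq_addr.
have : c%:R <= N%:R - #|J|%:R :> R.
  have e : #|[predC J]| = (N - #|J|)%N.
    by apply/eqP; rewrite -(eqn_add2l #|J|) HC subnKC.
  by rewrite -natrB // ler_nat -e.
move: Ha; rewrite /J /= -/c ltr_pdivlMr // natrD => Ha Hc.
nra.
Qed.
Lemma memsetb (T : Type) (b : T -> bool) x : (x \in [set y | b y]) = b x.
Proof. by apply/idP/idP => [/set_mem|/mem_set]. Qed.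

Lemma card_set_sum (R : realType) (N : nat) (c : 'I_N -> bool) :
  #|[set i | c i]|%:R = \sum_(i < N) (c i)%:R :> R.
Proof.
have -> : #|[set i | c i]| = #|[pred i | c i]|.
  by apply: eq_card => i; rewrite memsetb inE.
rewrite -sum1_card natr_sum big_mkcond /=.
by apply: eq_bigr => i _; rewrite inE; case: (c i).
Qed.

Lemma mset_bool d (T : measurableType d) (b : T -> bool) :
  measurable_fun setT b -> measurable [set x | b x].
Proof.
move=> mb; have := mb measurableT [set true] I.
by rewrite setTI.
Qed.

Lemma meas_pv d (T : measurableType d) (R : realType) (N : nat)
  (a b : 'I_N -> T -> R) (P : 'I_N -> bool) :
  (forall i, measurable_fun setT (a i)) -> (forall i, measurable_fun setT (b i)) ->
  measurable_fun setT
    (fun x => (1 + #|[set i | P i && (a i x <= b i x)]|)%:R / N%:R : R).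
Proof.
move=> ma mb.
have -> : (fun x => (1 + #|[set i | P i && (a i x <= b i x)]|)%:R / N%:R : R) =
  (fun x => (1 + \sum_(i < N) (P i)%:R * \1_[set y | a i y <= b i y] x) * N%:R^-1).
  apply/funext => x; rewrite natrD card_set_sum; congr (_ * _); congr (_ + _).
  by apply: eq_bigr => i _; rewrite indicE memsetb -natrM mulnb.
apply: measurable_realfun.measurable_funM => //.
apply: measurable_realfun.measurable_funD => //.
apply: measurable_sum => i; apply: measurable_realfun.measurable_funM => //.
apply: measurable_realfun.measurable_indic; apply: mset_bool.
exact: measurable_realfun.measurable_fun_ler.
Qed.

Definition aug (R : realType) (n dd : nat)
  (q : (n.-tuple (datum R dd) * dd.-tuple R) * R) : n.+1.-tuple (datum R dd) :=
  [tuple match unlift ord_max i with Some j => tnth q.1.1 j | None => (q.1.2, q.2) end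
   | i < n.+1].

Arguments aug {R n dd}.

Lemma augE (R : realType) (T : Type) (n dd : nat) (Z : 'I_n.+1 -> T -> datum R dd) w y :
  augment Z w y = aug (cond_var Z w, y).
Proof.
apply: eq_from_tnth => i; rewrite !tnth_mktuple.
case: (unliftP ord_max i) => [j ->|->]; last by rewrite eqxx.
rewrite eq_sym (negbTE (neq_lift _ _)) /= tnth_mktuple; congr (Z _ w).
by apply: val_inj; rewrite /= /bump leqNgt ltn_ord.
Qed.

Lemma full_augment (R : realType) (T : Type) (n dd : nat) (Z : 'I_n.+1 -> T -> datum R dd) w :
  full_data Z w = augment Z w (Z ord_max w).2.
Proof.
apply: eq_from_tnth => i; rewrite !tnth_mktuple.
by case: eqP => [->|//]; case: (Z ord_max w).
Qed.

Lemma measurable_aug (R : realType) (n dd : nat) :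
  measurable_fun [set: (n.-tuple (datum R dd) * dd.-tuple R) * measurableTypeR R]
    (@aug R n dd : _ -> n.+1.-tuple (datum R dd)).
Proof.
apply/measurable_fun_tnthP => i /=.
have -> : (tnth (T:=datum R dd))^~ i \o @aug R n dd =
   fun q => match unlift ord_max i with Some j => tnth q.1.1 j | None => (q.1.2, q.2) end.
  by apply/funext => q /=; rewrite tnth_mktuple.
case: (unlift ord_max i) => [j|].
  apply: (measurableT_comp (f := fun t : n.-tuple (datum R dd) => tnth t j)).
    exact: measurable_tnth.
  exact: measurableT_comp.
by apply: measurable_fun_pair => //; exact: measurableT_comp.
Qed.

Lemma measurable_score (R : realType) (n dd : nat)
  (fit : n.+1.-tuple (datum R dd) -> dd.-tuple R -> R) (s : R -> R -> R) (i : 'I_n.+1) :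
  measurable_fun [set: (n.+1.-tuple (datum R dd) * dd.-tuple R)%type]
    (fun q => fit q.1 q.2) ->
  measurable_fun [set: (R * R)%type] (fun q => s q.1 q.2) ->
  measurable_fun [set: n.+1.-tuple (datum R dd)] (fun z => score fit s z i).
Proof.
move=> mfit ms; rewrite /score.
have mt : measurable_fun [set: n.+1.-tuple (datum R dd)] (fun z => tnth z i).
  exact: measurable_tnth.
apply: (@measurableT_comp _ _ _ _ _ _ (fun q : R * R => s q.1 q.2) _
   (fun z => ((tnth z i).2, fit z (tnth z i).1)) ms).
apply: measurable_fun_pair.
  exact: (measurableT_comp (f := snd)).
apply: (@measurableT_comp _ _ _ _ _ _ (fun q : _ * _ => fit q.1 q.2) _
   (fun z => (z, (tnth z i).1)) mfit).
apply: measurable_fun_pair => //.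
exact: (measurableT_comp (f := fst)).
Qed.

Set Implicit Arguments.
Unset Strict Implicit.
Local Open Scope ereal_scope.
Definition inner (R : realType) dW (Wt : measurableType dW) (h : Wt -> R -> \bar R)
  (G : set (Wt * measurableTypeR R)) (w : Wt) : \bar R :=
  \int[@lebesgue_measure R]_(y in xsection G w) h w y.

Lemma innerE (R : realType) dW (Wt : measurableType dW) (h : Wt -> R -> \bar R)
  (G : set (Wt * measurableTypeR R)) :
  inner h G = fubini_F (@lebesgue_measure R) (fun q => (\1_G q)%:E * h q.1 q.2).
Proof.
apply/funext => w; rewrite /inner /fubini_F [LHS]integral_mkcond.
apply: eq_integral => y _; rewrite patchE indicE mem_xsection.
by case: ((w, y) \in G); rewrite ?mul1e ?mul0e.
Qed.

Lemma measurable_inner (R : realType) dW (Wt : measurableType dW) (h : Wt -> R -> \bar R)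
  (G : set (Wt * measurableTypeR R)) :
  measurable_fun [set: Wt * measurableTypeR R] (fun q : Wt * measurableTypeR R => h q.1 q.2) ->
  (forall w y, 0 <= h w y) -> measurable G ->
  measurable_fun [set: Wt] (inner h G).
Proof.
move=> mh h0 mG; rewrite innerE.
apply: measurable_fun_fubini_tonelli_F.
  apply: emeasurable_funM => //.
  by apply/measurable_EFinP; exact: measurable_realfun.measurable_indic.
by move=> q; apply: mule_ge0 => //; rewrite lee_fin indicE.
Qed.

Definition mu2 d (T : measurableType d) (R : realType) (P : {measure set T -> \bar R})
  dW (Wt : measurableType dW) (W : T -> Wt) (h : Wt -> R -> \bar R)
  (mW : measurable_fun setT W)
  (mh : measurable_fun [set: Wt * measurableTypeR R] (fun q : Wt * measurableTypeR R => h q.1 q.2))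
  (h0 : forall w y, 0 <= h w y) : set (Wt * measurableTypeR R) -> \bar R :=
  fun G => \int[P]_x inner h G (W x).


Lemma mu2_0 d (T : measurableType d) (R : realType) (P : {measure set T -> \bar R})
  dW (Wt : measurableType dW) (W : T -> Wt) (h : Wt -> R -> \bar R) mW mh h0 :
  @mu2 d T R P dW Wt W h mW mh h0 set0 = 0.
Proof.
rewrite /mu2; apply: integral0_eq => x _.
by rewrite /inner xsection0 integral_set0.
Qed.

Lemma mu2_ge0 d (T : measurableType d) (R : realType) (P : {measure set T -> \bar R})
  dW (Wt : measurableType dW) (W : T -> Wt) (h : Wt -> R -> \bar R) mW mh h0 G :
  0 <= @mu2 d T R P dW Wt W h mW mh h0 G.
Proof. by apply: integral_ge0 => x _; apply: integral_ge0. Qed.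

Lemma mu2_sigma_additive d (T : measurableType d) (R : realType) (P : {measure set T -> \bar R})
  dW (Wt : measurableType dW) (W : T -> Wt) (h : Wt -> R -> \bar R) mW mh h0 :
  semi_sigma_additive (@mu2 d T R P dW Wt W h mW mh h0).
Proof.
move=> F mF tF mUF.
rewrite [X in _ --> X](_ : _ = \sum_(n <oo) @mu2 d T R P dW Wt W h mW mh h0 (F n)).
  apply/cvg_closeP; split; last by rewrite closeE.
  by apply: is_cvg_nneseries => n _ _; exact: mu2_ge0.
rewrite /mu2 -integral_nneseries//; last first.
- by move=> n x _; apply: integral_ge0.
- move=> n; apply: (measurableT_comp (f := inner h (F n))) => //.
  exact: measurable_inner.
apply: eq_integral => x _; rewrite /inner xsection_bigcup ge0_integral_bigcup//.
- by move=> k; exact: measurable_xsection.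
- apply: measurable_funTS.
  apply: (@measurableT_comp _ _ _ _ _ _ (fun q : Wt * measurableTypeR R => h q.1 q.2) _
    (fun y => (W x, y)) mh).
  exact: measurable_fun_pair.
- exact: trivIset_xsection.
Qed.

HB.instance Definition _ d (T : measurableType d) (R : realType) (P : {measure set T -> \bar R})
  dW (Wt : measurableType dW) (W : T -> Wt) (h : Wt -> R -> \bar R) mW mh h0 :=
  isMeasure.Build _ _ _ (@mu2 d T R P dW Wt W h mW mh h0)
    (mu2_0 P mW mh h0) (@mu2_ge0 d T R P dW Wt W h mW mh h0)
    (@mu2_sigma_additive d T R P dW Wt W h mW mh h0).

Definition pfw d d' (T1 : measurableType d) (T2 : measurableType d') (R : realType)
  (m : {measure set T1 -> \bar R}) (f : T1 -> T2) (mf : measurable_fun [set: T1] f) :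
  set T2 -> \bar R := fun A => m (f @^-1` A).

Lemma pfw0 d d' (T1 : measurableType d) (T2 : measurableType d') (R : realType)
  (m : {measure set T1 -> \bar R}) (f : T1 -> T2) (mf : measurable_fun [set: T1] f) :
  pfw m mf set0 = 0.
Proof. by rewrite /pfw preimage_set0 measure0. Qed.

Lemma pfw_ge0 d d' (T1 : measurableType d) (T2 : measurableType d') (R : realType)
  (m : {measure set T1 -> \bar R}) (f : T1 -> T2) (mf : measurable_fun [set: T1] f) A :
  0 <= pfw m mf A.
Proof. by []. Qed.

Lemma pfw_sigma_additive d d' (T1 : measurableType d) (T2 : measurableType d') (R : realType)
  (m : {measure set T1 -> \bar R}) (f : T1 -> T2) (mf : measurable_fun [set: T1] f) :
  semi_sigma_additive (pfw m mf).
Proof.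
move=> F mF tF mUF; rewrite /pfw preimage_bigcup.
apply: measure_semi_sigma_additive.
- by move=> n; rewrite -[X in measurable X]setTI; exact: mf.
- apply/trivIsetP => /= i j _ _ ij; rewrite -preimage_setI.
  by move/trivIsetP : tF => /(_ _ _ _ _ ij) ->//; rewrite preimage_set0.
- by rewrite -preimage_bigcup -[X in measurable X]setTI; exact: mf.
Qed.

HB.instance Definition _ d d' (T1 : measurableType d) (T2 : measurableType d') (R : realType)
  (m : {measure set T1 -> \bar R}) (f : T1 -> T2) (mf : measurable_fun [set: T1] f) :=
  isMeasure.Build _ _ _ (pfw m mf) (@pfw0 _ _ _ _ _ m f mf) (@pfw_ge0 _ _ _ _ _ m f mf)
    (@pfw_sigma_additive _ _ _ _ _ m f mf).

Lemma density_ext d (T : measurableType d) (R : realType) (P : probability T R)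
  dW (Wt : measurableType dW) (W : T -> Wt) (Y : T -> R) (Yset : set R) (p : Wt -> R -> R) :
  measurable_fun setT W -> measurable_fun setT Y -> measurable Yset ->
  measurable_fun [set: (Wt * measurableTypeR R)%type] (fun q => p q.1 q.2) ->
  (forall w y, (0 <= p w y)%R) ->
  (forall (B : set Wt) (A : set (measurableTypeR R)), measurable B -> measurable A ->
     P (W @^-1` B `&` Y @^-1` A) =
     \int[P]_(x in W @^-1` B) \int[@lebesgue_measure R]_(y in A `&` Yset) (p (W x) y)%:E) ->
  forall G : set (Wt * measurableTypeR R), measurable G ->
  P ((fun x => (W x, Y x)) @^-1` G) =
  \int[P]_x inner (fun w y => (\1_Yset y * p w y)%:E) G (W x).
Proof.
move=> mW mY mYs mp p0 Hp.
set h := fun w y => (\1_Yset y * p w y)%:E.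
have mh : measurable_fun [set: Wt * measurableTypeR R]
    (fun q : Wt * measurableTypeR R => h q.1 q.2).
  apply/measurable_EFinP; apply: measurable_funM => //.
  apply: (@measurableT_comp _ _ _ _ _ _ (\1_Yset : measurableTypeR R -> R) _ snd) => //.
have h0 : forall w y, 0 <= h w y.
  by move=> w y; rewrite lee_fin mulr_ge0 // indicE.
have mf : measurable_fun setT (fun x => ((W x, Y x) : Wt * measurableTypeR R)).
  by exact: measurable_fun_pair.
pose m1 := pfw P mf.
pose m2 := mu2 P mW mh h0.
move=> G mG.
have -> : P ((fun x => (W x, Y x)) @^-1` G) = m1 G by [].
have -> : \int[P]_x inner h G (W x) = m2 G by [].
set C := [set A `*` B | A in @measurable _ Wt & B in @measurable _ (measurableTypeR R)].
apply: (measure_unique C (fun _ => setT)) => //.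
- exact: measurable_prod_measurableType.
- move=> X Y' [X1 mX1 [X2 mX2 <-{X}]] [Y1 mY1 [Y2 mY2 <-{Y'}]].
  exists (X1 `&` Y1); first exact: measurableI.
  by exists (X2 `&` Y2); [exact: measurableI|rewrite setXI].
- by move=> _; exists setT => //; exists setT => //; rewrite setXTT.
- by rewrite bigcup_const.
- move=> _ [B mB [A mA <-]].
  transitivity (P (W @^-1` B `&` Y @^-1` A)); first by [].
  transitivity (\int[P]_x inner h (B `*` A) (W x)); last by [].
  rewrite Hp // [LHS]integral_mkcond.
  apply: eq_integral => x _.
  rewrite patchE; case: ifPn => xB.
  + rewrite /inner in_xsectionX; last by rewrite inE; move: xB; rewrite inE.
    rewrite [LHS]integral_mkcond [RHS]integral_mkcond; apply: eq_integral => y _.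
    rewrite !patchE /h indicE in_setI.
    by case: (y \in A); case: (y \in Yset); rewrite ?mul1r ?mul0r.
  + rewrite /inner notin_xsectionX ?integral_set0 //.
- move=> _; rewrite [X in X < _](_ : _ = P setT) ?probability_setT ?ltry //.
  by rewrite -(probability_setT P).
Qed.
Local Close Scope ereal_scope.
Local Open Scope classical_set_scope.
Local Open Scope ring_scope.

Lemma exch_bound (R : realType) d (T : measurableType d) (P : probability T R) (n dd : nat)
  (Z : 'I_n.+1 -> T -> datum R dd)
  (fit : n.+1.-tuple (datum R dd) -> dd.-tuple R -> R) (s : R -> R -> R) (alpha : R) :
  (forall i, measurable_fun [set: T] (Z i)) ->
  measurable_fun [set: (n.+1.-tuple (datum R dd) * dd.-tuple R)%type]
    (fun q => fit q.1 q.2) ->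
  measurable_fun [set: (R * R)%type] (fun q => s q.1 q.2) ->
  exchangeable P Z ->
  (forall z z' : n.+1.-tuple (datum R dd), perm_eq z z' -> fit z = fit z') ->
  {ae P, forall w, injective (score fit s (full_data Z w))} ->
  0 < alpha < 1 ->
  (P [set w | (alpha < pval (score fit s (full_data Z w)))%R] <=
     (1 - alpha + (n.+1)%:R^-1)%:E)%E.
Proof.
move=> mZ mfit ms exch fitsym Hinj /andP[a0 a1].
set N := n.+1.
pose z := fun w => full_data Z w.
have mz : measurable_fun setT z.
  apply/measurable_fun_tnthP => i /=.
  have -> : (tnth (T:=datum R dd))^~ i \o z = Z i.
    by apply/funext => w /=; rewrite tnth_mktuple.
  exact: mZ.
pose Sc := fun (zz : N.-tuple (datum R dd)) i => score fit s zz i.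
pose pv := fun j (zz : N.-tuple (datum R dd)) =>
  (1 + #|[set i | (i != j) && (Sc zz j <= Sc zz i)]|)%:R / N%:R : R.
have mpv : forall j, measurable_fun setT (pv j).
  move=> j; apply: (@meas_pv _ _ R N (fun _ zz => Sc zz j) (fun i zz => Sc zz i)).
    by move=> _; exact: measurable_score.
  by move=> i; exact: measurable_score.
pose A := fun j => [set zz | alpha < pv j zz].
have mA : forall j, measurable (A j).
  move=> j; apply: mset_bool; apply: measurable_fun_ltr => //.
pose E := fun j => z @^-1` A j.
have mE : forall j, measurable (E j).
  by move=> j; rewrite -[E j]setTI; apply: mz.
have EF : [set w | alpha < pval (score fit s (full_data Z w))] = E ord_max by [].
rewrite EF.
have Eeq : forall j, P (E j) = P (E ord_max).
  move=> j.
  pose sg := tperm j (@ord_max n).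
  have := exch sg (A ord_max) (mA _).
  have -> : (fun w => [tuple Z i w | i < n.+1]) = z by [].
  have pveq : forall w, pv ord_max [tuple Z (sg i) w | i < n.+1] = pv j (z w).
    move=> w; set zs := [tuple Z (sg i) w | i < n.+1].
    have fz : fit zs = fit (z w).
      apply: fitsym; apply/tuple_permP; exists sg.
      by congr val; apply: eq_from_tnth => i; rewrite !tnth_mktuple.
    have Sceq : forall i, Sc zs i = Sc (z w) (sg i).
      by move=> i; rewrite /Sc /score fz !tnth_mktuple.
    rewrite /pv !natrD !card_set_sum; congr (_ * _); congr (_ + _).
    rewrite [RHS](reindex_inj (@perm_inj _ sg)); apply: eq_bigr => k _.
    have e : (sg k == j) = (k == ord_max).
      by rewrite -[k == ord_max](inj_eq (@perm_inj _ sg)) /sg tpermR.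
    by rewrite !Sceq /sg tpermR -/sg e.
  move=> <-; congr (P _).
  by apply/seteqP; split => w /=; rewrite /A /= pveq.
have PF : P (E ord_max) = (fine (P (E ord_max)))%:E.
  by rewrite fineK // fin_num_measure.
set pF := fine (P (E ord_max)) in PF.
have N0 : (0 : R) < N%:R by rewrite ltr0n.
have Hsum : (\sum_(j < N) P (E j) = (N%:R * pF)%:E)%E.
  under eq_bigr do rewrite Eeq PF.
  by rewrite sumEFin sumr_const card_ord mulr_natl.
have mI : forall j, measurable_fun setT (fun w => (\1_(E j) w)%:E : \bar R).
  by move=> j; apply/measurable_EFinP; exact: measurable_indic.
have Hsum2 : (\sum_(j < N) P (E j) = \int[P]_w \sum_(j < N) (\1_(E j) w)%:E)%E.
  have I0 : forall j w, setT w -> (0 <= (\1_(E j) w)%:E :> \bar R)%E.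
    by move=> j w _; rewrite lee_fin indicE.
  rewrite ge0_integral_sum //.
  by apply: eq_bigr => j _; rewrite integral_indic // setIT.
set K := N%:R * (1 - alpha) + 1.
have Hle : (\int[P]_w \sum_(j < N) (\1_(E j) w)%:E <= \int[P]_w K%:E)%E.
  apply: ae_ge0_le_integral => //.
  - by move=> w _; apply: sume_ge0 => j _; rewrite lee_fin indicE.
  - exact: emeasurable_sum.
  - have ha : (0:R) <= 1 - alpha by rewrite subr_ge0 ltW.
    by move=> w _; rewrite lee_fin /K (addr_ge0 (mulr_ge0 (ltW N0) ha) ler01).
  apply: filterS Hinj => w Hw _.
  rewrite sumEFin lee_fin.
  have -> : \sum_(j < N) \1_(E j) w = #|[set j | alpha < pv j (z w)]|%:R :> R.
    rewrite (@card_set_sum R N (fun j => alpha < pv j (z w))); apply: eq_bigr => j _; rewrite indicE.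
    have -> : (w \in E j) = (alpha < pv j (z w)).
      by apply/idP/idP => [/set_mem|/mem_set].
    by [].
  exact: count_bound.
have Hint : (\int[P]_w K%:E = K%:E)%E.
  rewrite integral_cst // -[RHS]mule1; congr (_ * _)%E; exact: probability_setT.
move: Hle; rewrite -Hsum2 Hsum Hint lee_fin => Hle.
rewrite PF lee_fin -(ler_pM2l N0) mulrDr mulfV ?gt_eqF //.
Qed.

Unset Implicit Arguments.
Set Strict Implicit.
Theorem lemma26 (R : realType) (d : measure_display) (T : measurableType d)
  (P : probability T R) (n dd : nat) (Xset : set (dd.-tuple R)) (Yset : set R)
  (Z : 'I_n.+1 -> T -> datum R dd)
  (fit : n.+1.-tuple (datum R dd) -> dd.-tuple R -> R) (s : R -> R -> R)
  (Stil tau : n.+1.-tuple (datum R dd) -> 'I_n.+1 -> R) (c alpha : R) :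
  measurable Yset ->
  (forall i, measurable_fun [set: T] (Z i)) ->
  (forall i w, Xset (Z i w).1 /\ Yset (Z i w).2) ->
  measurable_fun [set: (n.+1.-tuple (datum R dd) * dd.-tuple R)%type]
    (fun q => fit q.1 q.2) ->
  measurable_fun [set: (R * R)%type] (fun q => s q.1 q.2) ->
  (forall a b, 0 <= s a b) ->
  (forall i, measurable_fun [set: n.+1.-tuple (datum R dd)] (fun z => Stil z i)) ->
  (forall i, measurable_fun [set: n.+1.-tuple (datum R dd)] (fun z => tau z i)) ->
  (forall w y, Yset y -> forall i,
     0 <= tau (augment Z w y) i /\
     `|score fit s (augment Z w y) i - Stil (augment Z w y) i| <= tau (augment Z w y) i) ->
  exchangeable P Z ->
  (forall z z' : n.+1.-tuple (datum R dd), perm_eq z z' -> fit z = fit z') ->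
  {ae P, forall w, injective (score fit s (full_data Z w))} ->
  0 < c ->
  cond_density_bounded P (cond_var Z) (fun w => (Z ord_max w).2) Yset c ->
  0 < alpha < 1 ->
  (P [set w | C_tilde Yset Z Stil tau alpha w (Z ord_max w).2] <=
   (1 - alpha + (n.+1)%:R^-1)%:E
     + c%:E * \int[P]_w THK Yset Z fit s Stil tau alpha w)%E.
Proof.
move=> mYs mZ ZXY mfit ms s0 mSt mtau Htau exch fitsym Hinj c0 [p [mp p0 pc Hp]] a01.
pose W := cond_var Z.
pose Yv := fun w => (Z ord_max w).2.
have mW : measurable_fun setT W.
  apply: measurable_fun_pair.
    apply/measurable_fun_tnthP => i /=.
    have -> : (tnth (T:=datum R dd))^~ i \o (fun w => [tuple Z (widen_ord (leqnSn n) i0) w | i0 < n]) = Z (widen_ord (leqnSn n) i).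
      by apply/funext => w /=; rewrite tnth_mktuple.
    exact: mZ.
  exact: (measurableT_comp (f := fst)).
have mYv : measurable_fun setT Yv by exact: (measurableT_comp (f := snd)).
pose Wt := (n.-tuple (datum R dd) * dd.-tuple R)%type.
pose ptil := fun q : Wt * measurableTypeR R => pval_tilde (Stil (aug q)) (tau (aug q)).
pose phat := fun q : Wt * measurableTypeR R => pval (score fit s (aug q)).
have maug := @measurable_aug R n dd.
have mptil : measurable_fun setT ptil.
  apply: (@meas_pv _ _ R n.+1 (fun _ q => Stil (aug q) ord_max - tau (aug q) ord_max)
                              (fun i q => Stil (aug q) i + tau (aug q) i)).
  - move=> _; apply: measurable_funB.
      exact: (measurableT_comp (mSt _) maug).
    exact: (measurableT_comp (mtau _) maug).
  - move=> i; apply: measurable_funD.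
      exact: (measurableT_comp (mSt _) maug).
    exact: (measurableT_comp (mtau _) maug).
have mphat : measurable_fun setT phat.
  apply: (@meas_pv _ _ R n.+1 (fun _ q => score fit s (aug q) ord_max)
                              (fun i q => score fit s (aug q) i)).
  - move=> _; apply: (@measurableT_comp _ _ _ _ _ _ (fun z => score fit s z ord_max) _ aug) => //.
    exact: measurable_score.
  - move=> i; apply: (@measurableT_comp _ _ _ _ _ _ (fun z => score fit s z i) _ aug) => //.
    exact: measurable_score.
pose H1 := [set q : Wt * measurableTypeR R | Yset q.2 /\ alpha < ptil q].
pose H2 := [set q : Wt * measurableTypeR R | Yset q.2 /\ alpha < phat q].
have mH : forall f : Wt * measurableTypeR R -> R, measurable_fun setT f ->
    measurable [set q : Wt * measurableTypeR R | Yset q.2 /\ alpha < f q].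
  move=> f mf.
  have -> : [set q : Wt * measurableTypeR R | Yset q.2 /\ alpha < f q] =
     (snd @^-1` Yset) `&` [set q | alpha < f q] by [].
  apply: measurableI.
    by rewrite -[X in measurable X]setTI; exact: (@measurable_snd _ _ Wt (measurableTypeR R)).
  by apply: mset_bool; apply: measurable_fun_ltr.
have mH1 : measurable H1 by exact: mH.
have mH2 : measurable H2 by exact: mH.
pose Gs := symdiff H1 H2.
have mGs : measurable Gs.
  by apply: measurableU; apply: measurableD.
have Ctil_eq : forall w, C_tilde Yset Z Stil tau alpha w = xsection H1 (W w).
  move=> w; apply/seteqP; split => y; rewrite /xsection /= in_setE /= /C_tilde /= augE //.
have Chat_eq : forall w, C_hat Yset Z fit s alpha w = xsection H2 (W w).
  move=> w; apply/seteqP; split => y; rewrite /xsection /= in_setE /= /C_hat /= augE //.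
have THKE : forall w, THK Yset Z fit s Stil tau alpha w = lebesgue_measure (xsection Gs (W w)).
  move=> w; rewrite /THK Ctil_eq Chat_eq; congr (lebesgue_measure _).
  apply/seteqP; split => y; rewrite /symdiff /xsection /= !in_setE /=.
    by case=> -[]; [left|right].
  by case=> -[]; [left|right].
pose f := fun w => ((W w, Yv w) : Wt * measurableTypeR R).
have mf : measurable_fun setT f by exact: measurable_fun_pair.
have mpre : forall G, measurable G -> measurable (f @^-1` G).
  by move=> G mG; rewrite -[X in measurable X]setTI; exact: mf.
have EE : [set w | C_tilde Yset Z Stil tau alpha w (Z ord_max w).2] = f @^-1` H1.
  apply/seteqP; split => w; rewrite /= Ctil_eq /xsection /= in_setE //.
pose F := [set w | alpha < pval (score fit s (full_data Z w))].
have FE : F = f @^-1` [set q | alpha < phat q].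
  apply/seteqP; split => w; rewrite /F /= /phat /= -augE -full_augment //.
have mF : measurable F.
  by rewrite FE; apply: mpre; apply: mset_bool; apply: measurable_fun_ltr.
have sub : f @^-1` H1 `<=` F `|` f @^-1` Gs.
  move=> w H1w.
  have [Fw|nFw] := boolP (alpha < pval (score fit s (full_data Z w))); first by left.
  right; left; split => // -[_ H2w].
  move: nFw; rewrite /phat /= -augE -full_augment in H2w.
  by rewrite H2w.
rewrite EE.
have mm1 : measurable (f @^-1` H1) := mpre _ mH1.
have mm2 : measurable (F `|` f @^-1` Gs) by apply: measurableU => //; exact: mpre.
apply: (le_trans (le_measure P (mem_set mm1) (mem_set mm2) sub)).
apply: (le_trans (measureU2 P mF (mpre _ mGs))).
apply: leeD.
  exact: exch_bound.
set h := fun w y => (\1_Yset y * p w y)%:E.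
have DE : P (f @^-1` Gs) = (\int[P]_x inner h Gs (W x))%E.
  exact: (density_ext mW mYv mYs mp p0 Hp mGs).
have mh : measurable_fun [set: Wt * measurableTypeR R]
    (fun q : Wt * measurableTypeR R => h q.1 q.2).
  apply/measurable_EFinP; apply: measurable_funM => //.
  by apply: (@measurableT_comp _ _ _ _ _ _ (\1_Yset : measurableTypeR R -> R) _ snd) => //.
have h0 : forall w y, (0 <= h w y)%E.
  by move=> w y; rewrite lee_fin mulr_ge0 // indicE.
apply: (@le_trans _ _ (\int[P]_x inner h Gs (W x))%E).
  by move: (lexx (P (f @^-1` Gs))); rewrite {2}DE.
under [X in (_ <= _ * X)%E]eq_integral do rewrite THKE.
have mL : measurable_fun setT (fun x => lebesgue_measure (xsection Gs (W x))).
  apply: (@measurableT_comp _ _ _ _ _ _ (fun w => lebesgue_measure (xsection Gs w)) _ W) => //.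
  exact: measurable_fun_xsection.
rewrite -ge0_integralZl //; last by rewrite lee_fin ltW.
apply: ge0_le_integral => //.
- by move=> x _; apply: integral_ge0 => y _; exact: h0.
- apply: (@measurableT_comp _ _ _ _ _ _ (inner h Gs) _ W) => //.
  exact: measurable_inner.
- exact: measurable_funeM.
move=> x _; rewrite /inner -integral_cst; last exact: measurable_xsection.
apply: ge0_le_integral => //.
- exact: measurable_xsection.
- apply: measurable_funTS.
  apply: (@measurableT_comp _ _ _ _ _ _ (fun q : Wt * measurableTypeR R => h q.1 q.2) _
    (fun y => (W x, y)) mh).
  exact: measurable_fun_pair.
move=> y; rewrite /xsection /= in_setE => -[] -[] [Ys _] _;
  by rewrite /h indicE mem_set // mul1r lee_fin pc.
Qed.
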